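(* (i) There exists a doubly stochastic $2\times 2$ matrix $\mathcal N$ (for instance $\mathcal N=\frac19\begin{pmatrix}5&4\\4&5\end{pmatrix}$) such that for every $\kappa>\frac89$, no directed $3$-regular multigraph on $[2]$ has weak throughput at least $\kappa$ with respect to $\mathcal N$. (ii) For every positive integer $n$ there exists a doubly stochastic $n\times n$ matrix $\mathcal M_n$ such that no directed $(2n-1)$-regular multigraph on $[n]$ has weak direct throughput at least $\kappa$ with respect to $\mathcal M_n$, for every $\kappa>\frac{7n-4}{8n-4}$ if $n$ is even and for every $\kappa>\frac{7n-3}{8n-4}$ if $n$ is odd.
   Context: Let $n\ge 1$ and $[n]=\{1,\dots,n\}$. Networks are finite directed multigraphs on vertex set $[n]$; self-loops and parallel arcs are allowed. A directed multigraph is directed $r$-regular if every vertex has exactly $r$ outgoing and exactly $r$ incoming arcs (a self-loop at $v$ counts as one outgoing and one incoming arc of $v$). A path is a non-empty sequence of arcs $((u_1,v_1),\dots,(u_\ell,v_\ell))$ with $v_i=u_{i+1}$ for $i<\ell$; it goes from $u_1$ to $v_\ell$ and has length $\ell\ge 1$. An $n\times n$ matrix is doubly stochastic if all entries are nonnegative and every row and every column sums to $1$. In a directed $(2n-1)$-regular multigraph $G$ on $[n]$ every arc has capacity $\frac{1}{2n-1}$. $G$ hosts a nonnegative $n\times n$ matrix $\mathcal M=(a_{i,j})$ if there is a finite collection $\{(P_k,d_k)\}$, where each $P_k$ is a path in $G$ from some $s_k$ to some $t_k$ and $d_k\ge 0$, such that $\sum_{k:\,s_k=u,\,t_k=v}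 d_k=a_{u,v}$ for all $u,v\in[n]$, and for every arc $e$ of $G$ (parallel arcs are distinct) $\sum_{k:\,e\in P_k} d_k\le \frac{1}{2n-1}$. $G$ directly hosts $\mathcal M$ if this is possible with all paths $P_k$ of length $1$. For doubly stochastic $\mathcal M=(a_{i,j})$, the weak throughput (resp. weak direct throughput) of $G$ is the largest $\eta$ such that $G$ hosts (resp. directly hosts) some matrix $\mathcal M'=(a'_{i,j})$ with $0\le a'_{i,j}\le a_{i,j}$ for all $i,j$ and $\sum_{i,j}a'_{i,j}=\eta\sum_{i,j}a_{i,j}=\eta n$. *)

(* Defs.v *)
From HB Require Import structures.
From mathcomp Require Import all_boot all_order all_algebra.
From mathcomp Require Import boolp classical_sets reals.
Set Implicit Arguments. Unset Strict Implicit. Unset Printing Implicit Defensive.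
Import Order.TTheory GRing.Theory Num.Theory.
Local Open Scope ring_scope.

(* A finite directed multigraph on [n] = 'I_n : arcs are 'I_(narcs G),
   each with a source and a target (self-loops, parallel arcs allowed). *)
Record multigraph (n : nat) := Multigraph {
  narcs : nat;
  src : 'I_narcs -> 'I_n;
  tgt : 'I_narcs -> 'I_n }.

Definition arc n (G : multigraph n) := 'I_(narcs G).

Definition directed_regular n (G : multigraph n) (r : nat) : Prop :=
  forall v : 'I_n,
    #|[set e : arc G | src e == v]| = r /\ #|[set e : arc G | tgt e == v]| = r.

(* A path is a non-empty sequence of arcs e :: p with tgt of each arc equal
   to the src of the next one. *)
Definition is_gpath n (G : multigraph n) (e : arc G) (p : seq (arc G)) : bool :=
  path [rel x y | tgt x == src y] e p.

Definition doubly_stochastic (R : numDomainType) n (A : 'M[R]_n) : Prop :=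
  (forall i j, 0 <= A i j) /\
  (forall i, \sum_j A i j = 1) /\ (forall j, \sum_i A i j = 1).

(* A routing: finite collection of (path, demand) triples ((e, p), d)
   representing path e :: p with weight d. *)
Definition routing_ok (R : realDomainType) n (G : multigraph n)
    (s : seq ((arc G * seq (arc G)) * R)) (A : 'M[R]_n) : Prop :=
  (forall k, k \in s -> is_gpath k.1.1 k.1.2 /\ 0 <= k.2) /\
  (forall u v : 'I_n,
     \sum_(k <- s | (src k.1.1 == u) && (tgt (last k.1.1 k.1.2) == v)) k.2
       = A u v) /\
  (forall e : arc G,
     \sum_(k <- s | e \in k.1.1 :: k.1.2) k.2 <= ((2 * n - 1)%N%:R)^-1).

Definition hosts (R : realDomainType) n (G : multigraph n) (A : 'M[R]_n) : Prop :=
  exists s : seq ((arc G * seq (arc G)) * R), routing_ok s A.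

Definition directly_hosts (R : realDomainType) n (G : multigraph n)
    (A : 'M[R]_n) : Prop :=
  exists s : seq ((arc G * seq (arc G)) * R), routing_ok s A /\ (forall k, k \in s -> k.1.2 = [::]).

Definition achievable_with (R : realDomainType) n
    (host : 'M[R]_n -> Prop) (M : 'M[R]_n) (eta : R) : Prop :=
  exists A : 'M[R]_n,
    (forall i j, 0 <= A i j <= M i j) /\
    \sum_i \sum_j A i j = eta * \sum_i \sum_j M i j /\ host A.

Definition weak_throughput (R : realType) n (G : multigraph n) (M : 'M[R]_n) : R :=
  sup [set eta | achievable_with (@hosts R n G) M eta].

Definition weak_direct_throughput (R : realType) n (G : multigraph n)
    (M : 'M[R]_n) : R :=
  sup [set eta | achievable_with (@directly_hosts R n G) M eta].

(* Main.v *)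
Require Import Defs.
From HB Require Import structures.
From mathcomp Require Import all_boot all_order all_algebra.
From mathcomp Require Import boolp classical_sets reals.
From mathcomp Require Import ring lra zify.
Import Order.TTheory GRing.Theory Num.Theory.
Local Open Scope ring_scope.
Set Implicit Arguments. Unset Strict Implicit.
Local Notation arc := Defs.arc.

Section Aux.
Variable R : realDomainType.

Lemma part_seq (T : Type) (I : finType) (r : seq T) (P : pred T) (f : T -> I)
  (w : T -> R) :
  \sum_(k <- r | P k) w k = \sum_(i : I) \sum_(k <- r | P k && (f k == i)) w k.
Proof.
rewrite (exchange_big_dep P) => [|i j _ /andP[] //].
apply: eq_bigr => k Pk.
by rewrite (big_pred1 (f k)) // => i; rewrite Pk /= eq_sym.
Qed.

Lemma part_nat (T : finType) (P : pred T) (I : finType) (f : T -> I) :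
  (\sum_(k : T | P k) 1 = \sum_(i : I) \sum_(k | P k && (f k == i)) 1)%N.
Proof.
rewrite (exchange_big_dep P) => [|i j _ /andP[] //].
apply: eq_bigr => k Pk.
by rewrite (big_pred1 (f k)) // => i; rewrite Pk /= eq_sym.
Qed.

Lemma part_pair n (T : Type) (r : seq T) (a b : T -> 'I_n)
  (F : 'I_n -> 'I_n -> R) (w : T -> R) :
  \sum_(k <- r) F (a k) (b k) * w k =
  \sum_u \sum_v F u v * \sum_(k <- r | (a k == u) && (b k == v)) w k.
Proof.
rewrite (part_seq _ _ a); apply: eq_bigr => u _.
rewrite (part_seq _ _ b); apply: eq_bigr => v _.
rewrite mulr_sumr; apply: eq_big => [k //|k /andP[/andP[_ /eqP->] /eqP->]] //.
Qed.

Lemma sum_sub_seq (T : eqType) (r : seq T) (P Q : pred T) (w : T -> R) :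
  (forall k, k \in r -> 0 <= w k) -> (forall k, k \in r -> P k -> Q k) ->
  \sum_(k <- r | P k) w k <= \sum_(k <- r | Q k) w k.
Proof.
move=> w0 PQ; rewrite [X in X <= _]big_mkcond [X in _ <= X]big_mkcond.
rewrite big_seq [X in _ <= X]big_seq; apply: ler_sum => k ks.
case: (boolP (P k)) => Pk; first by rewrite (PQ k ks Pk).
by case: ifP => // _; apply: w0.
Qed.

Lemma sum_ord2 (F : 'I_2 -> R) : \sum_(i < 2) F i = F ord0 + F ord_max.
Proof.
rewrite big_ord_recl big_ord1; congr (_ + F _); exact: val_inj.
Qed.

Lemma sum_ord2n (F : 'I_2 -> nat) : (\sum_(i < 2) F i = F ord0 + F ord_max)%N.
Proof.
rewrite big_ord_recl big_ord1; congr (_ + F _)%N; exact: val_inj.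
Qed.

Lemma sum_mem_ge (T : finType) (L : seq T) (y : T -> R) e0 :
  (forall e, 0 <= y e) -> e0 \in L ->
  y e0 <= \sum_e (if e \in L then y e else 0).
Proof.
move=> y0 h; rewrite (bigD1 e0) //= h lerDl sumr_ge0 // => e _.
by case: ifP.
Qed.

Lemma sum_mem_ge2 (T : finType) (L : seq T) (y : T -> R) e0 e1 :
  (forall e, 0 <= y e) -> e0 \in L -> e1 \in L -> e1 != e0 ->
  y e0 + y e1 <= \sum_e (if e \in L then y e else 0).
Proof.
move=> y0 h0 h1 ne; rewrite (bigD1 e0) //= h0 lerD2l (bigD1 e1) //= h1.
by rewrite lerDl sumr_ge0 // => e _; case: ifP.
Qed.
End Aux.

Definition cnt n (G : multigraph n) (u v : 'I_n) : nat :=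
  \sum_(e : arc G | (src e == u) && (tgt e == v)) 1.

Lemma outdeg n (G : multigraph n) u :
  #|[set e : arc G | src e == u]| = (\sum_v cnt G u v)%N.
Proof.
rewrite -sum1_card (part_nat _ (@tgt n G)); apply: eq_bigr => v _.
by apply: eq_bigl => e; rewrite inE.
Qed.

Lemma indeg n (G : multigraph n) v :
  #|[set e : arc G | tgt e == v]| = (\sum_u cnt G u v)%N.
Proof.
rewrite -sum1_card (part_nat _ (@src n G)); apply: eq_bigr => u _.
by apply: eq_bigl => e; rewrite inE andbC.
Qed.

Lemma arc_sum (R : realDomainType) n (G : multigraph n) (F : 'I_n -> 'I_n -> R) :
  \sum_(e : arc G) F (src e) (tgt e) = \sum_u \sum_v (cnt G u v)%:R * F u v.
Proof.
have := part_pair (index_enum (arc G)) (@src n G) (@tgt n G) F (fun _ => 1).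
under eq_bigr do rewrite mulr1.
move=> ->; apply: eq_bigr => u _; apply: eq_bigr => v _.
by rewrite mulrC /cnt natr_sum.
Qed.

Lemma gpath_loops n (G : multigraph n) (e : arc G) p :
  is_gpath e p -> (forall x, x \in e :: p -> src x == tgt x) ->
  tgt (last e p) = src e.
Proof.
elim: p e => [|f p IH] e /=.
  by move=> _ h; apply/eqP; rewrite eq_sym h // mem_head.
move=> /andP[/eqP ef pf] h.
rewrite IH //; first by rewrite -ef; apply/eqP; rewrite eq_sym h // mem_head.
by move=> x xp; apply: h; rewrite inE xp orbT.
Qed.

Section Main.
Variable R : realFieldType.

Lemma dual_bound n (G : multigraph n) s (A : 'M[R]_n) (y : arc G -> R)
  (mu : 'I_n -> 'I_n -> R) :
  routing_ok s A -> (forall e, 0 <= y e) ->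
  (forall k, k \in s -> 1 <= \sum_e (if e \in k.1.1 :: k.1.2 then y e else 0)
                          + mu (src k.1.1) (tgt (last k.1.1 k.1.2))) ->
  \sum_u \sum_v A u v <=
  (\sum_e y e) * ((2 * n - 1)%N%:R)^-1 + \sum_u \sum_v mu u v * A u v.
Proof.
case=> [pos [dem cap]] y0 phi.
have E (F : 'I_n -> 'I_n -> R) : \sum_u \sum_v F u v * A u v =
    \sum_(k <- s) F (src k.1.1) (tgt (last k.1.1 k.1.2)) * k.2.
  rewrite (part_pair s (fun k => src k.1.1) (fun k => tgt (last k.1.1 k.1.2))).
  by apply: eq_bigr => u _; apply: eq_bigr => v _; rewrite dem.
rewrite (_ : \sum_u \sum_v A u v = \sum_(k <- s) 1 * k.2); last first.
  by rewrite -(E (fun _ _ => 1)); apply: eq_bigr => u _; apply: eq_bigr => v _;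
    rewrite mul1r.
rewrite E.
set Phi := fun k : (arc G * seq (arc G)) * R =>
  \sum_e (if e \in k.1.1 :: k.1.2 then y e else 0).
apply: (@le_trans _ _ (\sum_(k <- s) (Phi k * k.2 +
     mu (src k.1.1) (tgt (last k.1.1 k.1.2)) * k.2))).
  rewrite big_seq [X in _ <= X]big_seq; apply: ler_sum => k ks.
  rewrite -mulrDl ler_wpM2r //; [exact: (pos k ks).2 | exact: phi].
rewrite big_split /= lerD2r.
rewrite /Phi; under eq_bigr do rewrite mulr_suml.
rewrite exchange_big /= mulr_suml; apply: ler_sum => e _.
rewrite (_ : \sum_(i <- s) _ = y e * \sum_(k <- s | e \in k.1.1 :: k.1.2) k.2).
  by rewrite ler_wpM2l.
rewrite mulr_sumr [RHS]big_mkcond; apply: eq_bigr => k _.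
by case: ifP; rewrite ?mul0r ?mulr0.
Qed.

Lemma direct_le n (G : multigraph n) (s : seq ((arc G * seq (arc G)) * R)) (A : 'M[R]_n) u v :
  routing_ok s A -> (forall k, k \in s -> k.1.2 = [::]) ->
  A u v <= (cnt G u v)%:R * ((2 * n - 1)%N%:R)^-1.
Proof.
case=> [pos [dem cap]] dir.
rewrite -dem.
have -> : \sum_(k <- s | (src k.1.1 == u) && (tgt (last k.1.1 k.1.2) == v)) k.2
   = \sum_(k <- s | (src k.1.1 == u) && (tgt k.1.1 == v)) k.2.
  rewrite big_seq_cond [RHS]big_seq_cond; apply: eq_bigl => k.
  by case: (boolP (k \in s)) => //= ks; rewrite (dir k ks).
rewrite (part_seq _ _ (fun k : (arc G * seq (arc G)) * R => k.1.1)).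
rewrite /cnt natr_sum mulr_suml [X in _ <= X]big_mkcond /=.
apply: ler_sum => e _.
case: ifP => Pe.
  rewrite mul1r; apply: le_trans (cap e).
  apply: sum_sub_seq; first by move=> k ks; exact: (pos k ks).2.
  by move=> k _ /andP[_ /eqP ->]; rewrite mem_head.
rewrite big1 // => k /andP[/andP[/eqP su /eqP tv] /eqP ke].
by move: Pe; rewrite -ke su tv !eqxx.
Qed.

Lemma row_bound n (u : 'I_n) (c : 'I_n -> nat) (x : 'I_n -> R) :
  (0 < n)%N -> (\sum_v c v = 2 * n - 1)%N -> (forall v, 0 <= x v) ->
  (forall v, x v <= (c v)%:R) -> x u <= (3 * n%:R - 1) / 2 ->
  (forall v, v != u -> x v <= 1 / 2) ->
  4 * \sum_v x v <= (if odd n then 7 * n%:R - 3 else 7 * n%:R - 4).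
Proof.
move=> n0 hs x0 xc xu xh.
set j := (\sum_(v | v != u) (0 < c v) : nat)%N.
have hj : (c u + j <= 2 * n - 1)%N.
  rewrite -hs (bigD1 u) //= leq_add2l; apply: leq_sum => v _; by case: (c v).
have hx : \sum_(v | v != u) x v <= j%:R / 2.
  rewrite /j natr_sum mulr_suml; apply: ler_sum => v vu.
  move: (xc v); case: (c v) => [|m] h /=; first by rewrite mul0r.
  by rewrite mul1r -[_^-1]mul1r; apply: xh.
rewrite (bigD1 u) //=.
have hcu := xc u.
have hj' : (c u)%:R + j%:R + 1 <= 2 * n%:R :> R.
  have : ((c u + j).+1 <= 2 * n)%N by lia.
  rewrite -addn1 -(ler_nat R) !natrD; lra.
have [m hn] : exists m, n = (m.*2 + odd n)%N by exists n./2; rewrite addnC odd_double_half.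
have hjm : (j < m)%N \/ (m <= j)%N by case: (ltnP j m); [left|right].
have hnR : n%:R = 2 * m%:R + (odd n)%:R :> R.
  by rewrite {1}hn natrD -muln2 natrM; lra.
move: (hx); set S := \sum_(v | v != u) x v => hS.
case: (odd n) hnR => /= hnR.
  case: hjm => hjm.
    have : ((j + 1)%:R <= m%:R :> R) by rewrite ler_nat addn1.
    rewrite natrD => hjm'. lra.
  have : (m%:R <= j%:R :> R) by rewrite ler_nat.
  move=> hjm'. lra.
case: hjm => hjm.
  have : ((j + 1)%:R <= m%:R :> R) by rewrite ler_nat addn1.
  rewrite natrD => hjm'. lra.
have : (m%:R <= j%:R :> R) by rewrite ler_nat.
move=> hjm'. lra.
Qed.
End Main.

Lemma zero_ach (R : realType) n (G : multigraph n) (M : 'M[R]_n) :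
  (forall i j, 0 <= M i j) ->
  achievable_with (@directly_hosts R n G) M 0 /\ achievable_with (@hosts R n G) M 0.
Proof.
move=> M0.
have ro : routing_ok (R:=R) (G:=G) [::] 0.
  split; first by [].
  split; first by move=> u v; rewrite big_nil mxE.
  move=> e; rewrite big_nil invr_ge0 ler0n //.
split; exists 0; (split; [by move=> i j; rewrite mxE lexx M0|]);
  (split; [by rewrite mul0r; apply: big1 => i _; apply: big1 => j _; rewrite mxE|]).
  by exists [::]; split.
by exists [::].
Qed.

Lemma part2 (R : realType) : 
  (forall n : nat, (0 < n)%N ->
     exists M : 'M[R]_n,
       doubly_stochastic M /\
       forall kappa : R,
         (if odd n then (7 * n - 3)%N%:R / (8 * n - 4)%N%:R
          else (7 * n - 4)%N%:R / (8 * n - 4)%N%:R) < kappa ->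
       forall G : multigraph n, directed_regular G (2 * n - 1) ->
         ~ (kappa <= weak_direct_throughput G M)).
Proof.
move=> n n0.
have hn1 : 1 <= n%:R :> R by rewrite ler1n.
have Ke : (2 * n - 1)%N%:R = 2 * n%:R - 1 :> R.
  by rewrite natrB ?muln_gt0 // natrM.
set a : R := (3 * n%:R - 1) / (2 * (2 * n%:R - 1)).
set b : R := (2 * (2 * n%:R - 1))^-1.
have K0 : 0 < 2 * n%:R - 1 :> R by lra.
have a0 : 0 <= a by apply: divr_ge0; lra.
have b0 : 0 <= b by rewrite invr_ge0; lra.
have rowsum : b *+ n + (a - b) = 1.
  rewrite -mulr_natr /a /b; field; lra.
pose M := \matrix_(i, j) (b + (if i == j then a - b else 0)) : 'M[R]_n.
have sumrow (i : 'I_n) : \sum_j (if i == j then a - b else 0) = a - b.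
  rewrite (bigD1 i) //= eqxx big1 ?addr0 // => j /negbTE; rewrite eq_sym => ->.
  done.
have sumcol (j : 'I_n) : \sum_i (if i == j then a - b else 0) = a - b.
  rewrite (bigD1 j) //= eqxx big1 ?addr0 // => i /negbTE ->.
  done.
have M0 i j : 0 <= M i j by rewrite mxE; case: eqP => _; [rewrite addrC subrK | rewrite addr0].
have sumM : \sum_i \sum_j M i j = n%:R.
  under eq_bigr do (under eq_bigr do rewrite mxE; rewrite big_split /= sumrow sumr_const card_ord rowsum).
  by rewrite sumr_const card_ord.
exists M; split.
  split; first exact: M0.
  split=> i.
    by under eq_bigr do rewrite mxE; rewrite big_split /= sumrow sumr_const card_ord.
  by under eq_bigr do rewrite mxE; rewrite big_split /= sumcol sumr_const card_ord.
move=> kappa hk G reg hle.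
set B : R := (if odd n then 7 * n%:R - 3 else 7 * n%:R - 4) / (4 * (2 * n%:R - 1)).
have hB : weak_direct_throughput G M <= B.
  apply: ge_sup; first by exists 0; exact: (zero_ach G M0).1.
  move=> eta [A [hA [hsum [s [ro dir]]]]].
  have rowb (u : 'I_n) : 4 * \sum_v (A u v * (2 * n%:R - 1)) <=
      (if odd n then 7 * n%:R - 3 else 7 * n%:R - 4).
    apply: (row_bound (c := cnt G u)) => //.
    - by rewrite -outdeg; exact: (reg u).1.
    - by move=> v; apply: mulr_ge0; [case/andP: (hA u v) | lra].
    - move=> v; rewrite -ler_pdivlMr // -Ke; exact: (direct_le _ _ ro dir).
    - case/andP: (hA u u) => _ h; apply: le_trans (ler_wpM2r (ltW K0) h) _.
      rewrite mxE eqxx addrC subrK /a; rewrite le_eqVlt; apply/orP; left; apply/eqP.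
      field; lra.
    - move=> v vu; case/andP: (hA u v) => _ h; apply: le_trans (ler_wpM2r (ltW K0) h) _.
      rewrite mxE eq_sym (negbTE vu) addr0 /b; rewrite le_eqVlt; apply/orP; left; apply/eqP.
      field; lra.
  have tot : 4 * (2 * n%:R - 1) * (eta * n%:R) <=
      n%:R * (if odd n then 7 * n%:R - 3 else 7 * n%:R - 4).
    have h1 : \sum_(u < n) 4 * \sum_v (A u v * (2 * n%:R - 1)) <=
        \sum_(u < n) (if odd n then 7 * n%:R - 3 else 7 * n%:R - 4).
      by apply: ler_sum => u _; exact: rowb.
    rewrite sumr_const card_ord in h1.
    have e : \sum_(u < n) 4 * \sum_v (A u v * (2 * n%:R - 1)) =
        4 * (2 * n%:R - 1) * (eta * n%:R).
      rewrite -sumM -hsum -mulr_sumr; under eq_bigr do rewrite -mulr_suml.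
      rewrite -mulr_suml; ring.
    by rewrite -e [X in _ <= X]mulr_natl.
  have n0R : 0 < n%:R :> R by lra.
  rewrite /B ler_pdivlMr; last by lra.
  move: tot; rewrite (_ : 4 * (2 * n%:R - 1) * (eta * n%:R) =
     (eta * (4 * (2 * n%:R - 1))) * n%:R); last by ring.
  by rewrite [n%:R * _]mulrC ler_pM2r.
have e1 : (7 * n - 3)%N%:R = 7 * n%:R - 3 :> R by rewrite natrB ?natrM //; lia.
have e2 : (7 * n - 4)%N%:R = 7 * n%:R - 4 :> R by rewrite natrB ?natrM //; lia.
have e3 : (8 * n - 4)%N%:R = 4 * (2 * n%:R - 1) :> R.
  by rewrite natrB ?natrM //; [lra | lia].
move: hk hB; rewrite /B e1 e2 e3; case: ifP => _ hk hB;
  have := lt_le_trans hk (le_trans hle hB); by rewrite ltxx.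
Qed.


Lemma ord2_cases (i : 'I_2) : i = ord0 \/ i = ord_max.
Proof.
case: i => [[|[|k]] h]; [left; exact: val_inj | right; exact: val_inj |].
by [].
Qed.

Lemma part1 (R : realType) :
  (exists N : 'M[R]_2,
     doubly_stochastic N /\
     forall kappa : R, 8 / 9 < kappa ->
     forall G : multigraph 2, directed_regular G 3 ->
       ~ (kappa <= weak_throughput G N)).
Proof.
pose N : 'M[R]_2 := \matrix_(i, j) (if i == j then 5 / 9 else 4 / 9).
have N0 i j : 0 <= N i j by rewrite mxE; case: ifP => _; lra.
have e01 : (ord0 == ord_max :> 'I_2) = false by [].
have e10 : (ord_max == ord0 :> 'I_2) = false by [].
have sumN : \sum_i \sum_j N i j = 2.
  by rewrite !sum_ord2 !mxE !eqxx e01 e10; lra.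
exists N; split.
  split; first exact: N0.
  split=> i; rewrite sum_ord2 !mxE; case: (ord2_cases i) => ->;
    rewrite ?eqxx ?e01 ?e10; lra.
move=> kappa hk G reg hle.
have hB : weak_throughput G N <= 8 / 9.
  apply: ge_sup; first by exists 0; exact: (zero_ach G N0).2.
  move=> eta [A [hA [hsum [s ro]]]].
  have hpos := ro.1.
  have Ae (u v : 'I_2) : 0 <= A u v <= N u v by [].
  have A00 := Ae ord0 ord0; have A01 := Ae ord0 ord_max.
  have A10 := Ae ord_max ord0; have A11 := Ae ord_max ord_max.
  rewrite !mxE !eqxx e01 e10 in A00 A01 A10 A11.
  case/andP: A00 => A00a A00b; case/andP: A01 => A01a A01b.
  case/andP: A10 => A10a A10b; case/andP: A11 => A11a A11b.
  rewrite sumN !sum_ord2 in hsum.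
  have [o0 i0] := reg ord0; have [o1 i1] := reg ord_max.
  rewrite outdeg sum_ord2n in o0; rewrite outdeg sum_ord2n in o1.
  rewrite indeg sum_ord2n in i0; rewrite indeg sum_ord2n in i1.
  set c00 := cnt G ord0 ord0 in o0 i0 *; set c01 := cnt G ord0 ord_max in o0 i1 *.
  set c10 := cnt G ord_max ord0 in o1 i0 *; set c11 := cnt G ord_max ord_max in o1 i1 *.
  have q1 : c00%:R + c01%:R = 3 :> R by rewrite -natrD o0.
  have q2 : c00%:R + c10%:R = 3 :> R by rewrite -natrD i0.
  have q3 : c10%:R + c11%:R = 3 :> R by rewrite -natrD o1.
  have [hc|hc] := leqP c00 1.
    have hcR : c00%:R <= 1 :> R by rewrite (ler_nat R 
    c00 1).
    pose Y (u v : 'I_2) : R := if u == v then 1 else 1 / 2.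
    pose y (e : arc G) := Y (src e) (tgt e).
    pose mu (u v : 'I_2) : R := if u == v then 0 else 1 / 2.
    have y0 e : 0 <= y e by rewrite /y /Y; case: ifP => _; lra.
    have phi : forall k, k \in s -> 1 <= \sum_e (if e \in k.1.1 :: k.1.2 then y e else 0)
                          + mu (src k.1.1) (tgt (last k.1.1 k.1.2)).
      move=> k ks.
      have mu0 : 0 <= mu (src k.1.1) (tgt (last k.1.1 k.1.2)).
        by rewrite /mu; case: ifP => _; lra.
      case: (boolP (src k.1.1 == tgt k.1.1)) => he.
        have ye : y k.1.1 = 1 by rewrite /y /Y he.
        have := sum_mem_ge y0 (mem_head k.1.1 k.1.2); lra.
      have ye : y k.1.1 = 1 / 2 by rewrite /y /Y (negbTE he).
      case: (boolP (src k.1.1 == tgt (last k.1.1 k.1.2))) => hl.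
        have ne : last k.1.1 k.1.2 != k.1.1.
          apply/negP => /eqP eq; move: hl; rewrite eq.
          by rewrite (negbTE he).
        have yl : 1 / 2 <= y (last k.1.1 k.1.2) by rewrite /y /Y; case: ifP => _; lra.
        have := sum_mem_ge2 y0 (mem_head _ _) (mem_last _ _) ne; lra.
      have mue : mu (src k.1.1) (tgt (last k.1.1 k.1.2)) = 1 / 2 by rewrite /mu (negbTE hl).
      have := sum_mem_ge y0 (mem_head k.1.1 k.1.2); lra.
    have := dual_bound ro y0 phi.
    rewrite (arc_sum G Y) /mu /Y !sum_ord2 !eqxx e01 e10 /=.
    rewrite -/c00 -/c01 -/c10 -/c11 (_ : (2 * 2 - 1)%:R = 3 :> R) //.
    lra.
  have hcR : 2 <= c00%:R :> R by rewrite (ler_nat R 2 c00).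
  pose Y (u v : 'I_2) : R := if u == v then 0 else 1.
  pose y (e : arc G) := Y (src e) (tgt e).
  pose mu (u v : 'I_2) : R := if u == v then 1 else 0.
  have y0 e : 0 <= y e by rewrite /y /Y; case: ifP => _; lra.
  have phi : forall k, k \in s -> 1 <= \sum_e (if e \in k.1.1 :: k.1.2 then y e else 0)
                        + mu (src k.1.1) (tgt (last k.1.1 k.1.2)).
    move=> k ks.
    have S0 : 0 <= \sum_e (if e \in k.1.1 :: k.1.2 then y e else 0).
      by apply: sumr_ge0 => e _; case: ifP.
    case: (boolP (src k.1.1 == tgt (last k.1.1 k.1.2))) => hl.
      have mue : mu (src k.1.1) (tgt (last k.1.1 k.1.2)) = 1 by rewrite /mu hl.
      lra.
    have mue : mu (src k.1.1) (tgt (last k.1.1 k.1.2)) = 0 by rewrite /mu (negbTE hl).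
    case: (boolP (all (fun x => src x == tgt x) (k.1.1 :: k.1.2))) => hall.
      have := gpath_loops (hpos k ks).1 (fun x xin => (allP hall) x xin).
      by move=> h; rewrite h eqxx in hl.
    case/allPn: hall => x xin hx.
    have yx : y x = 1 by rewrite /y /Y (negbTE hx).
    have := sum_mem_ge y0 xin; lra.
  have := dual_bound ro y0 phi.
  rewrite (arc_sum G Y) /mu /Y !sum_ord2 !eqxx e01 e10 /=.
  rewrite -/c00 -/c01 -/c10 -/c11 (_ : (2 * 2 - 1)%:R = 3 :> R) //.
  lra.
by have := lt_le_trans hk (le_trans hle hB); rewrite ltxx.
Qed.

Theorem proposition4p4 (R : realType) :
  (exists N : 'M[R]_2,
     doubly_stochastic N /\
     forall kappa : R, 8 / 9 < kappa ->
     forall G : multigraph 2, directed_regular G 3 ->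
       ~ (kappa <= weak_throughput G N)) /\
  (forall n : nat, (0 < n)%N ->
     exists M : 'M[R]_n,
       doubly_stochastic M /\
       forall kappa : R,
         (if odd n then (7 * n - 3)%N%:R / (8 * n - 4)%N%:R
          else (7 * n - 4)%N%:R / (8 * n - 4)%N%:R) < kappa ->
       forall G : multigraph n, directed_regular G (2 * n - 1) ->
         ~ (kappa <= weak_direct_throughput G M)).
Proof. split; [exact: part1 | exact: part2]. Qed.
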